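(* Let $\boldsymbol\Sigma\in\mathbb R^{r\times r}$ be symmetric positive definite, $\boldsymbol\alpha\in\mathbb R^{k\times p}$, $\mathbf U\in\mathbb R^{r\times k}$ of full column rank, $\boldsymbol\beta=\mathbf U\boldsymbol\alpha$, $\mathcal B=\mathrm{span}(\boldsymbol\beta)$ and $\mathcal A=\mathrm{span}(\boldsymbol\alpha)$. Let $u=\dim\mathcal E_{\boldsymbol\Sigma}(\mathcal B)$, $\boldsymbol\Gamma\in\mathbb R^{r\times u}$ a semi-orthogonal basis of $\mathcal E_{\boldsymbol\Sigma}(\mathcal B)$ and $(\boldsymbol\Gamma,\boldsymbol\Gamma_0)$ an orthogonal matrix. Assume $\mathbf U=(\boldsymbol\Gamma\mathbf G,\boldsymbol\Gamma_0\mathbf G_0)$ where $\mathbf G\in\mathbb R^{u\times u_1}$ and $\mathbf G_0\in\mathbb R^{(r-u)\times(k-u_1)}$ both have full column rank (so $u_1\le u$). Let $\boldsymbol\Sigma_{D|S}=(\mathbf U^T\boldsymbol\Sigma^{-1}\mathbf U)^{-1}\in\mathbb R^{k\times k}$. Then $\dim\{\mathcal E_{\boldsymbol\Sigma_{D|S}}(\mathcal A)\}\le u_1\le\dim\{\mathcal E_{\boldsymbol\Sigma}(\mathcal B)\}$.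
   Context: For a symmetric matrix $\mathbf M\in\mathbb R^{m\times m}$, a subspace $\mathcal R\subseteq\mathbb R^m$ is a reducing subspace of $\mathbf M$ if $\mathbf M\mathcal R\subseteq\mathcal R$; for a subspace $\mathcal S\subseteq\mathbb R^m$, the $\mathbf M$-envelope $\mathcal E_{\mathbf M}(\mathcal S)$ is the smallest reducing subspace of $\mathbf M$ containing $\mathcal S$. Interpretation: in the model $\mathbf Y=\mathbf U\boldsymbol\alpha_0+\mathbf U\boldsymbol\alpha\mathbf X+\boldsymbol\varepsilon$, $\boldsymbol\varepsilon\sim N(0,\boldsymbol\Sigma)$, with $\mathbf Y_D=(\mathbf U^T\mathbf U)^{-1}\mathbf U^T\mathbf Y$ and $\mathbf Y_S=\mathbf U_0^T\mathbf Y$ ($\mathbf U_0$ a semi-orthogonal basis of $\mathrm{span}(\mathbf U)^\perp$), $\boldsymbol\Sigma_{D|S}$ is the conditional covariance of $\mathbf Y_D$ given $(\mathbf X,\mathbf Y_S)$. *)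

(* Defs.v *)
(* Subspaces of R^m are represented as row spaces (mxalgebra)
   of matrices with m columns; the column span of a matrix A is the row space
   of A^T. *)
From HB Require Import structures.
From mathcomp Require Import all_boot all_order all_algebra.
Set Implicit Arguments. Unset Strict Implicit. Unset Printing Implicit Defensive.
Import Order.TTheory GRing.Theory Num.Theory.
Local Open Scope ring_scope.

Definition spd (R : realFieldType) (m : nat) (S : 'M[R]_m) : Prop :=
  S^T = S /\ forall v : 'rV[R]_m, v != 0 -> 0 < (v *m S *m v^T) 0 0.

(* the subspace (row space of) RR is a reducing subspace of M : M RR ⊆ RR,
   i.e. for every (column) vector x in RR, M x ∈ RR; on row vectors x^T M^T. *)
Definition reducing (R : fieldType) (m n : nat) (M : 'M[R]_m) (RR : 'M[R]_(n, m)) : bool :=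
  (RR *m M^T <= RR)%MS.

Definition is_envelope (R : fieldType) (m n1 n2 : nat) (M : 'M[R]_m)
    (S : 'M[R]_(n1, m)) (E : 'M[R]_(n2, m)) : Prop :=
  [/\ reducing M E, (S <= E)%MS &
      forall (n3 : nat) (RR : 'M[R]_(n3, m)), reducing M RR -> (S <= RR)%MS -> (E <= RR)%MS].

(* Main.v *)
Require Import Defs.
From HB Require Import structures.
From mathcomp Require Import all_boot all_order all_algebra.
Import Order.TTheory GRing.Theory Num.Theory.
Local Open Scope ring_scope.
Lemma red_inv (F: fieldType) m n (RR : 'M[F]_(n,m)) (N : 'M_m) :
  (RR *m N <= RR)%MS -> (RR *m invmx N <= RR)%MS.
Proof.
move=> H; case: (boolP (N \in unitmx)) => Nu; last by rewrite invmx_out.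
have H2: (RR <= RR *m N)%MS.
  rewrite -(mxrank_leqif_sup H) mxrankMfree ?row_free_unit //.
apply: submx_trans (submxMr (invmx N) H2) _.
by rewrite mulmxK.
Qed.

Theorem proposition4 (R : realFieldType) (r p u u1 k0 : nat)
    (Sigma : 'M[R]_r) (alpha : 'M[R]_(u1 + k0, p))
    (E : 'M[R]_r) (Gamma : 'M[R]_(r, u)) (Gamma0 : 'M[R]_(r, r - u))
    (G : 'M[R]_(u, u1)) (G0 : 'M[R]_(r - u, k0)) :
  spd Sigma ->
  (* E = E_Sigma(span(beta)), beta = U alpha, U = (Gamma G, Gamma0 G0) *)
  is_envelope Sigma ((row_mx (Gamma *m G) (Gamma0 *m G0) *m alpha)^T) E ->
  (* Gamma semi-orthogonal basis of E *)
  (Gamma^T == E)%MS ->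
  (* (Gamma, Gamma0) orthogonal *)
  Gamma^T *m Gamma = 1%:M -> Gamma0^T *m Gamma0 = 1%:M -> Gamma^T *m Gamma0 = 0 ->
  (* G, G0, U of full column rank *)
  \rank G = u1 -> \rank G0 = k0 ->
  \rank (row_mx (Gamma *m G) (Gamma0 *m G0)) = (u1 + k0)%N ->
  let U := row_mx (Gamma *m G) (Gamma0 *m G0) in
  let SigmaDS := invmx (U^T *m invmx Sigma *m U) in
  forall (n : nat) (EA : 'M[R]_(n, u1 + k0)),
    is_envelope SigmaDS alpha^T EA ->
    (\rank EA <= u1)%N /\ (u1 <= \rank E)%N.
Proof.
move=> _ [redE sBE _] GE GG G0G0 GG0 rG rG0 _ U SDS n EA [_ sAEA minEA].
have GEeq := eqmxP GE.
have rGam : \rank Gamma^T = u.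
  apply/eqP; rewrite eqn_leq; apply/andP; split; first exact: rank_leq_row.
  by rewrite -{1}(mxrank1 R u) -GG mxrankM_maxl.
split; last first.
  rewrite -(eqmx_rank GE) rGam; apply: leq_trans (rank_leq_row G); by rewrite rG.
pose RR : 'M[R]_(u1, u1 + k0) := row_mx 1%:M 0.
have inRR : forall m (A : 'M[R]_(m, u1 + k0)), rsubmx A = 0 -> (A <= RR)%MS.
  move=> m A HA; rewrite -(hsubmxK A) HA.
  have -> : row_mx (lsubmx A) (0 : 'M_(m, k0)) = lsubmx A *m RR.
    by rewrite mul_mx_row mulmx1 mulmx0.
  exact: submxMl.
have h1 : (Gamma^T *m Sigma^T <= Gamma^T)%MS.
  by rewrite (eqmxMr _ GEeq) GEeq.
have /submxP [D hD] := @red_inv R _ _ _ _ h1.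
have h2 : Gamma^T *m (invmx Sigma)^T *m Gamma0 = 0.
  by rewrite trmx_inv hD -mulmxA GG0 mulmx0.
have sEA : (EA <= RR)%MS.
  apply: minEA.
    rewrite /reducing /SDS trmx_inv !trmx_mul trmxK.
    apply: red_inv; apply: inRR.
    rewrite /U /RR tr_row_mx !mulmxA mul_row_col mul1mx mul0mx addr0.
    rewrite -mulmxA !mul_mx_row row_mxKr trmx_mul.
    by rewrite !mulmxA -(mulmxA G^T) -(mulmxA G^T) h2 mulmx0 mul0mx.
  apply: inRR.
  have hB : ((U *m alpha)^T <= Gamma^T)%MS by rewrite GEeq.
  have /submxP [Z hZ] := hB.
  have e1 : Gamma0^T *m (U *m alpha) = 0.
    by rewrite -[LHS]trmxK trmx_mul trmxK hZ -mulmxA GG0 mulmx0 trmx0.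
  have G0T : Gamma0^T *m Gamma = 0 by rewrite -[LHS]trmxK trmx_mul trmxK GG0 trmx0.
  have e2 : G0 *m dsubmx alpha = 0.
    move: e1; rewrite /U -{1}(vsubmxK alpha) mul_row_col mulmxDr !mulmxA G0T G0G0.
    by rewrite mul0mx mul0mx add0r mul1mx.
  have e3 : dsubmx alpha = 0.
    apply: trmx_inj; rewrite trmx0; apply/eqP; rewrite -(mulmx_free_eq0 _ (_ : row_free G0^T)); last first.
      by rewrite /row_free mxrank_tr rG0.
    by rewrite -trmx_mul e2 trmx0.
  by rewrite -{1}(vsubmxK alpha) tr_col_mx row_mxKr e3 trmx0.
by apply: leq_trans (mxrankS sEA) _; apply: rank_leq_row.
Qed.
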